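(* Let $K$ be a commutative field, let $q\in K$, and let $\mathcal{H}_{\mathcal{PP}}$ be the $K$-vector space with basis the set $\mathcal{PP}$ of isomorphism classes of plane posets. Define $\Delta_q:\mathcal{H}_{\mathcal{PP}}\to\mathcal{H}_{\mathcal{PP}}\otimes\mathcal{H}_{\mathcal{PP}}$ linearly by $$\Delta_q(P)=\sum_{I \text{ biideal of } P} q^{h(P\setminus I,\,I)}\,(P\setminus I)\otimes I,\qquad h(A,B)=\sharp\{(x,y)\in A\times B\mid x<_h y\},$$ for every plane poset $P$ (with the convention $q^0=1$). Then $\Delta_q$ is coassociative, i.e. $(\Delta_q\otimes \mathrm{Id})\circ\Delta_q=(\mathrm{Id}\otimes\Delta_q)\circ\Delta_q$, and for all plane posets $x,y$, writing $\Delta_q(x)=\sum x^{(1)}\otimes x^{(2)}$ and $\Delta_q(y)=\sum y^{(1)}\otimes y^{(2)}$ as sums of scalar multiples of tensors of plane posets, and $|\cdot|$ for cardinality: $$\Delta_q(xy)=\sum x^{(1)}\otimes x^{(2)}y+\sum xy^{(1)}\otimes y^{(2)}-x\otimes y,$$ $$\Delta_q(x\triangleleft y)=\sum q^{|x^{(1)}||y|}\,x^{(1)}\otimes x^{(2)}\triangleleft y+\sum q^{|x||y^{(2)}|}\,x\triangleleft y^{(1)}\otimes y^{(2)}-q^{|x||y|}\,x\otimes y.$$ Hence $(\mathcal{H}_{\mathcal{PP}},m,\Delta_q)$ is an infinitesimal Hopf algebra for every $q$, as well as $(\mathcal{H}_{\mathcal{PP}},\triangleleft,\Delta_1)$, where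 an infinitesimal Hopf algebra is an associative unital algebra with a coassociative coproduct $\Delta$ satisfying $\Delta(ab)=\Delta(a)(1\otimes b)+(a\otimes 1)\Delta(b)-a\otimes b$.
   Context: A plane poset is a finite set $P$ with two partial orders $\leq_h$ and $\leq_r$ such that for all $x\neq y$ in $P$, $x$ and $y$ are comparable for $\leq_h$ if and only if they are not comparable for $\leq_r$. Plane posets are considered up to isomorphism (bijections preserving both orders); the empty plane poset is denoted $1$. A subset of a plane poset, with the restricted orders, is again a plane poset (a plane subposet). A subset $I\subseteq P$ is a biideal of $P$ if for all $x,y\in P$, ($x\in I$ and $x\leq_h y$) implies $y\in I$, and ($x\in I$ and $x\leq_r y$) implies $y\in I$. For plane posets $P,Q$: the product $PQ$ (denoted $m$) is the plane poset on $P\sqcup Q$ in which $P,Q$ are plane subposets, no element of $P$ is $\leq_h$-comparable with an element of $Q$, and $x<_r y$ for all $x\in P$, $y\in Q$; the product $P\triangleleft Q$ is the plane poset on $P\sqcup Q$ in which $P,Q$ are plane subposets, no element of $P$ is $\leq_r$-comparable with an element of $Q$, and $x<_h y$ for all $x\in P,y\in Q$. Both products are extended bilinearly to $\mathcal{H}_{\mathcal{PP}}$; they are associative with unit $1$. *)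

(* Defs.v *)
From mathcomp Require Import all_boot all_order all_algebra.
Set Implicit Arguments. Unset Strict Implicit. Unset Printing Implicit Defensive.
Import GRing.Theory.
Local Open Scope ring_scope.

Record pp := PP { ppn : nat; ph : rel 'I_ppn; pr : rel 'I_ppn }.
Arguments ph : clear implicits.
Arguments pr : clear implicits.

Definition porder (n : nat) (R : rel 'I_n) : bool :=
  [&& [forall x, R x x],
      [forall x, forall y, (R x y && R y x) ==> (x == y)] &
      [forall x, forall y, forall z, (R x y && R y z) ==> R x z]].

Definition plane (P : pp) : bool :=
  [&& porder (ph P), porder (pr P) &
      [forall x, forall y, (x != y) ==>
         ((ph P x y || ph P y x) == ~~ (pr P x y || pr P y x))]].

Definition iso (P Q : pp) : bool :=
  (ppn P == ppn Q) &&
  [exists f : {ffun 'I_(ppn P) -> 'I_(ppn Q)},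
     injectiveb f &&
     [forall x, forall y, (ph P x y == ph Q (f x) (f y)) &&
                          (pr P x y == pr Q (f x) (f y))]].

Definition subpp (P : pp) (S : {set 'I_(ppn P)}) : pp :=
  @PP #|S| (fun i j => ph P (enum_val i) (enum_val j))
           (fun i j => pr P (enum_val i) (enum_val j)).

Definition biideal (P : pp) (I : {set 'I_(ppn P)}) : bool :=
  [forall x, forall y, ((x \in I) && ph P x y) ==> (y \in I)] &&
  [forall x, forall y, ((x \in I) && pr P x y) ==> (y \in I)].

Definition pp1 : pp := @PP 0 (fun _ _ => true) (fun _ _ => true).

Definition ppmul (P Q : pp) : pp :=
  @PP (ppn P + ppn Q)
    (fun i j => match split i, split j with
                | inl a, inl b => ph P a b
                | inr a, inr b => ph Q a b
                | _, _ => false end)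
    (fun i j => match split i, split j with
                | inl a, inl b => pr P a b
                | inr a, inr b => pr Q a b
                | inl _, inr _ => true
                | inr _, inl _ => false end).

Definition pptl (P Q : pp) : pp :=
  @PP (ppn P + ppn Q)
    (fun i j => match split i, split j with
                | inl a, inl b => ph P a b
                | inr a, inr b => ph Q a b
                | inl _, inr _ => true
                | inr _, inl _ => false end)
    (fun i j => match split i, split j with
                | inl a, inl b => pr P a b
                | inr a, inr b => pr Q a b
                | _, _ => false end).

(* Elements of H_PP, H_PP⊗H_PP, H_PP⊗H_PP⊗H_PP as formal linear combinations
   of (tuples of) representatives; they are compared through their
   coefficients on isomorphism classes (the basis PP, resp. PP×PP, PP×PP×PP). *)
Section Formal.
Variable K : fieldType.

Definition H := seq (K * pp).
Definition H2 := seq (K * (pp * pp)).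
Definition H3 := seq (K * (pp * pp * pp)).

Definition coef (s : H) (Q : pp) : K :=
  \sum_(t <- s) (if iso t.2 Q then t.1 else 0).
Definition coef2 (s : H2) (Q1 Q2 : pp) : K :=
  \sum_(t <- s) (if iso t.2.1 Q1 && iso t.2.2 Q2 then t.1 else 0).
Definition coef3 (s : H3) (Q1 Q2 Q3 : pp) : K :=
  \sum_(t <- s) (if [&& iso t.2.1.1 Q1, iso t.2.1.2 Q2 & iso t.2.2 Q3]
                 then t.1 else 0).

Definition eqH (s t : H) : Prop :=
  forall Q, plane Q -> coef s Q = coef t Q.
Definition eqH2 (s t : H2) : Prop :=
  forall Q1 Q2, plane Q1 -> plane Q2 -> coef2 s Q1 Q2 = coef2 t Q1 Q2.
Definition eqH3 (s t : H3) : Prop :=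
  forall Q1 Q2 Q3, plane Q1 -> plane Q2 -> plane Q3 ->
    coef3 s Q1 Q2 Q3 = coef3 t Q1 Q2 Q3.

Definition inH (s : H) : bool := all (fun t => plane t.2) s.

Definition hcount (P : pp) (I : {set 'I_(ppn P)}) : nat :=
  #|[set xy : 'I_(ppn P) * 'I_(ppn P) |
      [&& xy.1 \notin I, xy.2 \in I, xy.1 != xy.2 & ph P xy.1 xy.2]]|.

Definition Delta (q : K) (P : pp) : H2 :=
  [seq (q ^+ hcount J, (subpp (~: J), subpp J))
  | J <- enum [pred J : {set 'I_(ppn P)} | biideal J]].

Definition DeltaL (D : pp -> H2) (s : H) : H2 :=
  flatten [seq [seq (t.1 * u.1, u.2) | u <- D t.2] | t <- s].
Definition DeltaId (D : pp -> H2) (s : H2) : H3 :=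
  flatten [seq [seq (t.1 * u.1, (u.2.1, u.2.2, t.2.2)) | u <- D t.2.1] | t <- s].
Definition IdDelta (D : pp -> H2) (s : H2) : H3 :=
  flatten [seq [seq (t.1 * u.1, (t.2.1, u.2.1, u.2.2)) | u <- D t.2.2] | t <- s].

Definition coassociative (D : pp -> H2) : Prop :=
  forall s : H, inH s -> eqH3 (DeltaId D (DeltaL D s)) (IdDelta D (DeltaL D s)).

Definition infinitesimal_hopf (mul : pp -> pp -> pp) (one : pp)
    (D : pp -> H2) : Prop :=
  [/\ forall P Q R, plane P -> plane Q -> plane R ->
        iso (mul (mul P Q) R) (mul P (mul Q R)),
      forall P, plane P -> iso (mul one P) P /\ iso (mul P one) P,
      coassociative D &
      forall a b : H, inH a -> inH b ->
        eqH2 (DeltaL D [seq (u.1 * v.1, mul u.2 v.2) | u <- a, v <- b])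
             ([seq (u.1 * v.1, (u.2.1, mul u.2.2 v.2)) | u <- DeltaL D a, v <- b]
              ++ [seq (u.1 * v.1, (mul u.2 v.2.1, v.2.2)) | u <- a, v <- DeltaL D b]
              ++ [seq (- (u.1 * v.1), (u.2, v.2)) | u <- a, v <- b])].

End Formal.

(* Main.v *)
Require Import Defs.
From mathcomp Require Import all_boot all_order all_algebra.
Set Implicit Arguments. Unset Strict Implicit. Unset Printing Implicit Defensive.
Import GRing.Theory.
Local Open Scope ring_scope.

Definition emb (Q P : pp) (f : 'I_(ppn Q) -> 'I_(ppn P)) :=
  injective f /\ forall i j, ph Q i j = ph P (f i) (f j) /\ pr Q i j = pr P (f i) (f j).
Arguments emb : clear implicits.

Lemma emb_iso Q P f : emb Q P f -> ppn Q = ppn P -> iso Q P.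
Proof.
move=> [fi fr] e; rewrite /iso; apply/andP; split; first by apply/eqP.
apply/existsP; exists [ffun i => f i].
apply/andP; split.
  by apply/injectiveP => i j; rewrite !ffunE; exact: fi.
apply/forallP=> i; apply/forallP=> j; rewrite !ffunE.
by case: (fr i j) => -> ->; rewrite !eqxx.
Qed.

Lemma iso_emb Q P : iso Q P -> exists f, emb Q P f /\ ppn Q = ppn P.
Proof.
case/andP=> /eqP e /existsP [f /andP [/injectiveP fi /forallP fr]].
exists f; split=> //; split=> // i j.
by case/andP: (forallP (fr i) j) => /eqP -> /eqP ->.
Qed.

Lemma emb_id P : emb P P id.
Proof. by split. Qed.

Lemma emb_comp R Q P f g : emb R Q f -> emb Q P g -> emb R P (g \o f).
Proof.
move=> [fi fr] [gi gr]; split; first exact: inj_comp.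
move=> i j; case: (fr i j) => -> ->; exact: gr.
Qed.

Lemma iso_refl P : iso P P.
Proof. exact: (emb_iso (emb_id P)). Qed.

Lemma iso_trans P Q R : iso P Q -> iso Q R -> iso P R.
Proof.
move=> /iso_emb [f [ef e1]] /iso_emb [g [eg e2]].
apply: (emb_iso (emb_comp ef eg)); by rewrite e1.
Qed.

Lemma iso_sym P Q : iso P Q -> iso Q P.
Proof.
move=> /iso_emb [f [[fi fr] e]].
have [g fg gf] : bijective f by apply: inj_card_bij => //; rewrite !card_ord e.
apply: (@emb_iso _ _ g) => //; split; first exact: can_inj gf.
move=> i j; have := fr (g i) (g j); rewrite !gf; by case=> -> ->.
Qed.

Lemma iso_congr A A' Q : iso A A' -> iso A Q = iso A' Q.
Proof.
move=> h; apply/idP/idP => h2; [exact: iso_trans (iso_sym h) h2 | exact: iso_trans h h2].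
Qed.

Lemma emb_enum P (S : {set 'I_(ppn P)}) : emb (subpp S) P enum_val.
Proof. by split; [exact: enum_val_inj|]. Qed.

Lemma iso_subpp Q P (S : {set 'I_(ppn P)}) f : emb Q P f ->
  (forall x, x \in S <-> exists i, x = f i) -> iso Q (subpp S).
Proof.
move=> [fi fr] hS.
have fS i : f i \in S by apply/hS; exists i.
pose g i : 'I_#|S| := enum_rank_in (fS i) (f i).
have gE i : enum_val (g i) = f i by rewrite /g enum_rankK_in.
apply: (@emb_iso Q (subpp S) g).
  split.
    by move=> i j eij; apply: fi; rewrite -gE eij gE.
  by move=> i j; rewrite /= !gE; exact: fr.
have -> : S = f @: setT.
  apply/setP=> x; apply/idP/imsetP.
    by case/hS=> i ->; exists i.
  by case=> i _ ->.
have h := card_imset [set: 'I_(ppn Q)] fi. rewrite cardsT card_ord in h. by rewrite /= h.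
Qed.

Definition gprod (c : bool) (P Q : pp) : pp :=
  @PP (ppn P + ppn Q)
    (fun i j => match split i, split j with
                | inl a, inl b => ph P a b
                | inr a, inr b => ph Q a b
                | inl _, inr _ => c
                | inr _, inl _ => false end)
    (fun i j => match split i, split j with
                | inl a, inl b => pr P a b
                | inr a, inr b => pr Q a b
                | inl _, inr _ => ~~ c
                | inr _, inl _ => false end).

Lemma ppmulE P Q : ppmul P Q = gprod false P Q. Proof. by []. Qed.
Lemma pptlE P Q : pptl P Q = gprod true P Q. Proof. by []. Qed.

Lemma splitL m n (a : 'I_m) : split (lshift n a) = inl a.
Proof. exact: (unsplitK (inl a)). Qed.
Lemma splitR m n (b : 'I_n) : split (rshift m b) = inr b.
Proof. exact: (unsplitK (inr b)). Qed.

Definition gE := (splitL, splitR).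

Lemma emb_lshift c X Y : emb X (gprod c X Y) (lshift (ppn Y)).
Proof. by split; [exact: lshift_inj | move=> i j; rewrite /= !gE]. Qed.
Lemma emb_rshift c X Y : emb Y (gprod c X Y) (@rshift (ppn X) (ppn Y)).
Proof. by split; [exact: rshift_inj | move=> i j; rewrite /= !gE]. Qed.

Lemma emb_gprod c X Y Z fX fY : emb X Z fX -> emb Y Z fY ->
  (forall a b, fX a != fY b) ->
  (forall a b, [/\ ph Z (fX a) (fY b) = c, pr Z (fX a) (fY b) = ~~ c,
                   ph Z (fY b) (fX a) = false & pr Z (fY b) (fX a) = false]) ->
  emb (gprod c X Y) Z (fun i => match split i with inl a => fX a | inr b => fY b end).
Proof.
move=> [fXi fXr] [fYi fYr] ne cr; split.
  move=> i j; rewrite -(splitK i) -(splitK j) !unsplitK.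
  case: (split i) => a; case: (split j) => b /= e.
  - by rewrite (fXi _ _ e).
  - by move: (ne a b); rewrite e eqxx.
  - by move: (ne b a); rewrite e eqxx.
  - by rewrite (fYi _ _ e).
move=> i j; rewrite -(splitK i) -(splitK j) /= !unsplitK.
case: (split i) => a; case: (split j) => b /=.
- exact: fXr.
- by case: (cr a b).
- by case: (cr b a).
- exact: fYr.
Qed.

Definition hset nx ny (L : {set 'I_nx}) (R : {set 'I_ny}) : {set 'I_(nx + ny)} :=
  lshift ny @: L :|: @rshift nx ny @: R.

Lemma memhL nx ny L R a : (lshift ny a \in @hset nx ny L R) = (a \in L).
Proof.
rewrite in_setU (mem_imset _ _ (@lshift_inj _ _)).
case: (a \in L) => //=; apply/imsetP => -[b _ /eqP]; by rewrite eq_lrshift.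
Qed.

Lemma memhR nx ny L R b : (@rshift nx ny b \in @hset nx ny L R) = (b \in R).
Proof.
rewrite in_setU (mem_imset _ _ (@rshift_inj _ _)) orbC.
case: (b \in R) => //=; apply/imsetP => -[a _ /eqP]; by rewrite eq_rlshift.
Qed.

Definition hE := (memhL, memhR).

Lemma img_enum n (S : {set 'I_n}) a : a \in S <-> exists i : 'I_#|S|, a = enum_val i.
Proof.
split; first by move=> h; exists (enum_rank_in h a); rewrite enum_rankK_in.
by case=> i ->; exact: enum_valP.
Qed.

Lemma img_id n a : a \in [set: 'I_n] <-> exists i : 'I_n, a = i.
Proof. by split=> [_|]; [exists a | rewrite inE]. Qed.

Section GSub.
Variables (c : bool) (x y : pp).
Local Notation P := (gprod c x y).

Lemma iso_gsub X Y fX fY (L : {set 'I_(ppn x)}) (R : {set 'I_(ppn y)}) : emb X x fX -> emb Y y fY ->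
  (forall a, a \in L <-> exists i, a = fX i) ->
  (forall b, b \in R <-> exists i, b = fY i) ->
  iso (gprod c X Y) (subpp (P:=P) (hset L R)).
Proof.
move=> eX eY iL iR.
apply: (@iso_subpp (gprod c X Y) P _ (fun i => match split i with
   inl a => lshift (ppn y) (fX a) | inr b => rshift (ppn x) (fY b) end)).
  apply: (@emb_gprod c X Y P (lshift (ppn y) \o fX) (@rshift (ppn x) (ppn y) \o fY)).
  - exact: emb_comp eX (emb_lshift _ _ _).
  - exact: emb_comp eY (emb_rshift _ _ _).
  - by move=> a b; rewrite /= eq_lrshift.
  - by move=> a b; rewrite /= !gE.
move=> z; rewrite -(splitK z); case: (split z) => a /=.
  rewrite memhL; apply: iff_trans (iL a) _; split.
    by case=> i ->; exists (lshift (ppn Y) i); rewrite splitL.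
  case=> i; rewrite -(splitK i); case: (split i) => b /=; rewrite ?gE.
    by move/lshift_inj ->; exists b.
  by move/eqP; rewrite eq_lrshift.
rewrite memhR; apply: iff_trans (iR a) _; split.
  by case=> i ->; exists (rshift (ppn X) i); rewrite splitR.
case=> i; rewrite -(splitK i); case: (split i) => b /=; rewrite ?gE.
  by move/eqP; rewrite eq_rlshift.
by move/rshift_inj ->; exists b.
Qed.

Lemma iso_lsub X fX (L : {set 'I_(ppn x)}) : emb X x fX ->
  (forall a, a \in L <-> exists i, a = fX i) ->
  iso X (subpp (P:=P) (hset L set0)).
Proof.
move=> eX iL; apply: (@iso_subpp X P _ (lshift (ppn y) \o fX)).
  exact: emb_comp eX (emb_lshift _ _ _).
move=> z; rewrite -(splitK z); case: (split z) => a /=.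
  rewrite memhL; apply: iff_trans (iL a) _; split; case=> i e; exists i; first by rewrite e.
  by move: e => /= /lshift_inj.
rewrite memhR inE; split=> // -[i /eqP]; by rewrite eq_rlshift.
Qed.

Lemma iso_rsub Y fY (R : {set 'I_(ppn y)}) : emb Y y fY ->
  (forall b, b \in R <-> exists i, b = fY i) ->
  iso Y (subpp (P:=P) (hset set0 R)).
Proof.
move=> eY iR; apply: (@iso_subpp Y P _ (@rshift (ppn x) (ppn y) \o fY)).
  exact: emb_comp eY (emb_rshift _ _ _).
move=> z; rewrite -(splitK z); case: (split z) => a /=.
  rewrite memhL inE; split=> // -[i /eqP]; by rewrite eq_lrshift.
rewrite memhR; apply: iff_trans (iR a) _; split; case=> i e; exists i; first by rewrite e.
by move: e => /= /rshift_inj.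
Qed.

End GSub.

Lemma biidealP P (I : {set 'I_(ppn P)}) :
  reflect ((forall a b, a \in I -> ph P a b -> b \in I) /\
           (forall a b, a \in I -> pr P a b -> b \in I)) (biideal I).
Proof.
apply: (iffP andP) => -[H1 H2]; split.
- move=> a b aI hab; move/forallP: H1 => /(_ a)/forallP/(_ b).
  by rewrite aI hab.
- move=> a b aI hab; move/forallP: H2 => /(_ a)/forallP/(_ b).
  by rewrite aI hab.
- by apply/forallP=> a; apply/forallP=> b; apply/implyP=> /andP[]; exact: H1.
- by apply/forallP=> a; apply/forallP=> b; apply/implyP=> /andP[]; exact: H2.
Qed.

Lemma biideal_h c x y (L : {set 'I_(ppn x)}) (R : {set 'I_(ppn y)}) :
  biideal (P := gprod c x y) (hset L R) =
  [&& biideal L, biideal R & (L == set0) || (R == setT)].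
Proof.
apply/idP/idP.
  move/biidealP=> [H1 H2]; apply/and3P; split.
  - apply/biidealP; split=> a b.
      by have := H1 (lshift _ a) (lshift _ b); rewrite !hE /= !gE.
    by have := H2 (lshift _ a) (lshift _ b); rewrite !hE /= !gE.
  - apply/biidealP; split=> a b.
      by have := H1 (rshift _ a) (rshift _ b); rewrite !hE /= !gE.
    by have := H2 (rshift _ a) (rshift _ b); rewrite !hE /= !gE.
  - case: (set_0Vmem L) => [->|[a aL]]; first by rewrite eqxx.
    apply/orP; right; apply/eqP/setP => b; rewrite inE.
    have := H1 (lshift _ a) (rshift _ b); have := H2 (lshift _ a) (rshift _ b).
    rewrite !hE /= !gE aL; case: c H1 H2 => /= H1 H2; [move=> _; exact | move=> h _; exact: h].
case/and3P => /biidealP [L1 L2] /biidealP [R1 R2] LR.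
apply/biidealP; split=> i j; rewrite -(splitK i) -(splitK j);
  case: (split i) => a; case: (split j) => b /=; rewrite !hE /= !gE //.
- exact: L1.
- move=> aL _; case/orP: LR => [/eqP L0|/eqP ->]; last by rewrite inE.
  by move: aL; rewrite L0 inE.
- exact: R1.
- exact: L2.
- move=> aL _; case/orP: LR => [/eqP L0|/eqP ->]; last by rewrite inE.
  by move: aL; rewrite L0 inE.
- exact: R2.
Qed.

Lemma sum_in_card (T : finType) (A : {set T}) : (\sum_(t : T) (t \in A) = #|A|)%N.
Proof. by rewrite -sum1_card [RHS]big_mkcond /=; apply: eq_bigr => t _; case: (t \in A). Qed.

Definition hterm P (I : {set 'I_(ppn P)}) (i j : 'I_(ppn P)) : nat :=
  (i \notin I) && (j \in I) && (i != j) && ph P i j.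

Lemma hcountE P (I : {set 'I_(ppn P)}) : hcount I = (\sum_i \sum_j hterm I i j)%N.
Proof.
rewrite /hcount pair_bigA /= -sum_in_card; apply: eq_bigr => -[i j] _.
by rewrite inE /= !andbA.
Qed.

Section HC.
Variables (c : bool) (x y : pp) (L : {set 'I_(ppn x)}) (R : {set 'I_(ppn y)}).
Local Notation P := (gprod c x y).
Local Notation I := (hset L R).

Lemma sum_ll : (\sum_(i < ppn x) \sum_(j < ppn x)
   hterm (P := P) I (lshift _ i) (lshift _ j))%N = hcount L.
Proof.
rewrite hcountE; apply: eq_bigr => i _; apply: eq_bigr => j _.
by rewrite /hterm /= !hE !gE eq_lshift.
Qed.

Lemma sum_rr : (\sum_(i < ppn y) \sum_(j < ppn y)
   hterm (P := P) I (rshift _ i) (rshift _ j))%N = hcount R.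
Proof.
rewrite hcountE; apply: eq_bigr => i _; apply: eq_bigr => j _.
by rewrite /hterm /= !hE !gE (inj_eq (@rshift_inj _ _)).
Qed.

Lemma sum_rl : (\sum_(i < ppn y) \sum_(j < ppn x)
   hterm (P := P) I (rshift _ i) (lshift _ j))%N = 0%N.
Proof.
by apply: big1 => i _; apply: big1 => j _; rewrite /hterm /= !gE andbF.
Qed.

Lemma sum_lr : (\sum_(i < ppn x) \sum_(j < ppn y)
   hterm (P := P) I (lshift _ i) (rshift _ j))%N = (c * #|~: L| * #|R|)%N.
Proof.
transitivity (\sum_(i < ppn x) \sum_(j < ppn y) ((c * (i \notin L)) * (j \in R)))%N.
  apply: eq_bigr => i _; apply: eq_bigr => j _.
  rewrite /hterm /= !hE !gE eq_lrshift andbT.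
  by case: c; case: (i \in L); case: (j \in R).
under eq_bigr => i _ do rewrite -big_distrr /=.
rewrite -big_distrl /= -big_distrr /= -!sum_in_card; congr (_ * _ * _)%N.
by apply: eq_bigr => i _; rewrite inE.
Qed.

End HC.

Lemma hcount_h c x y (L : {set 'I_(ppn x)}) (R : {set 'I_(ppn y)}) :
  hcount (P := gprod c x y) (hset L R) =
  (hcount L + hcount R + c * #|~: L| * #|R|)%N.
Proof.
rewrite hcountE big_split_ord /=.
under eq_bigr => i _ do rewrite big_split_ord /=.
under [X in (_ + X)%N]eq_bigr => i _ do rewrite big_split_ord /=.
rewrite !big_split /= sum_ll sum_lr sum_rl sum_rr.
by rewrite add0n addnAC.
Qed.


Lemma biideal0 P : biideal (P := P) set0.
Proof. by apply/biidealP; split=> a b; rewrite inE. Qed.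
Lemma biidealT P : biideal (P := P) setT.
Proof. by apply/biidealP; split=> a b; rewrite !inE. Qed.

Lemma hcount0 P : hcount (P := P) set0 = 0%N.
Proof. by rewrite hcountE big1 // => i _; rewrite big1 // => j _; rewrite /hterm !inE. Qed.
Lemma hcountT P : hcount (P := P) setT = 0%N.
Proof. by rewrite hcountE big1 // => i _; rewrite big1 // => j _; rewrite /hterm !inE. Qed.

Lemma hsetC nx ny (L : {set 'I_nx}) (R : {set 'I_ny}) :
  ~: hset L R = hset (~: L) (~: R).
Proof.
apply/setP => z; rewrite -(splitK z); case: (split z) => a /=;
by rewrite inE ?memhL ?memhR inE.
Qed.

Lemma hset_bij nx ny : bijective (fun p : {set 'I_nx} * {set 'I_ny} => hset p.1 p.2).
Proof.
apply: (@Bijective _ _ _ (fun I : {set 'I_(nx + ny)} => ([set a | lshift ny a \in I], [set b | rshift nx b \in I]))).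
  move=> [L R] /=; congr (_, _); apply/setP => a; by rewrite inE ?memhL ?memhR.
move=> I; apply/setP => z; rewrite -(splitK z); case: (split z) => a /=;
by rewrite ?memhL ?memhR inE.
Qed.

Section Formal.
Variable K : fieldType.

Lemma coef2E (s : H2 K) Q1 Q2 :
  coef2 s Q1 Q2 = \sum_(t <- s) t.1 * (iso t.2.1 Q1 && iso t.2.2 Q2)%:R.
Proof. by apply: eq_bigr => t _; case: ifP; rewrite ?mulr1 ?mulr0. Qed.

Lemma coef2_Delta (q : K) P Q1 Q2 :
  coef2 (Delta q P) Q1 Q2 = \sum_(I | biideal (P := P) I)
     q ^+ hcount I * (iso (subpp (~: I)) Q1 && iso (subpp I) Q2)%:R.
Proof. by rewrite coef2E big_map big_enum /=. Qed.

Section Prod.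
Variables (c : bool) (q : K) (x y : pp) (Q1 Q2 : pp).
Local Notation P := (gprod c x y).

Definition Gt (p : {set 'I_(ppn x)} * {set 'I_(ppn y)}) : K :=
  q ^+ hcount (P := P) (hset p.1 p.2) *
  (iso (subpp (P := P) (~: hset p.1 p.2)) Q1 && iso (subpp (P := P) (hset p.1 p.2)) Q2)%:R.

Lemma GtLT L : Gt (L, setT) = q ^+ (hcount L + c * #|~: L| * ppn y) *
       (iso (subpp (~: L)) Q1 && iso (gprod c (subpp L) y) Q2)%:R.
Proof.
rewrite /Gt /= hcount_h hcountT addn0 cardsT card_ord hsetC setCT.
rewrite -(iso_congr _ (iso_lsub c y (emb_enum (~: L)) (@img_enum _ _))).
rewrite -(iso_congr _ (iso_gsub c (emb_enum L) (emb_id y) (@img_enum _ _) (@img_id _))).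
by [].
Qed.

Lemma Gt0R R : Gt (set0, R) = q ^+ (hcount R + c * ppn x * #|R|) *
       (iso (gprod c x (subpp (~: R))) Q1 && iso (subpp R) Q2)%:R.
Proof.
rewrite /Gt /= hcount_h hcount0 add0n setC0 cardsT card_ord hsetC setC0.
rewrite -(iso_congr _ (iso_gsub c (emb_id x) (emb_enum (~: R)) (@img_id _) (@img_enum _ _))).
rewrite -(iso_congr _ (iso_rsub c x (emb_enum R) (@img_enum _ _))).
by [].
Qed.

Lemma Gt0T : Gt (set0, setT) = q ^+ (c * ppn x * ppn y) * (iso x Q1 && iso y Q2)%:R.
Proof.
rewrite /Gt /= hcount_h hcount0 hcountT add0n setC0 !cardsT !card_ord hsetC setC0 setCT.
rewrite -(iso_congr _ (iso_lsub c y (emb_id x) (@img_id _))).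
rewrite -(iso_congr _ (iso_rsub c x (emb_id y) (@img_id _))).
by [].
Qed.


Lemma prod_formula : coef2 (Delta q P) Q1 Q2 =
   \sum_(L | biideal (P:=x) L) q ^+ (hcount L + c * #|~: L| * ppn y) *
       (iso (subpp (~: L)) Q1 && iso (gprod c (subpp L) y) Q2)%:R
 + \sum_(R | biideal (P:=y) R) q ^+ (hcount R + c * ppn x * #|R|) *
       (iso (gprod c x (subpp (~: R))) Q1 && iso (subpp R) Q2)%:R
 - q ^+ (c * ppn x * ppn y) * (iso x Q1 && iso y Q2)%:R.
Proof.
rewrite coef2_Delta (reindex (fun p => hset p.1 p.2)) /=; last exact: onW_bij (hset_bij _ _).
rewrite (eq_bigr Gt) // (eq_bigl (fun p => [&& biideal p.1, biideal p.2 & (p.1 == set0) || (p.2 == setT)])); last first.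
  by move=> p; rewrite biideal_h.
rewrite (bigID (fun p => p.2 == setT)) /=.
rewrite (eq_bigl (fun p => biideal p.1 && (p.2 == setT))); last first.
  move=> [L R] /=; case: (R =P setT) => [->|]; first by rewrite biidealT orbT !andbT.
  by rewrite !andbF.
rewrite [X in _ + X](eq_bigl (fun p => (p.1 == set0) && biideal p.2 && (p != (set0, setT)))); last first.
  move=> [L R] /=; rewrite xpair_eqE; case: (L =P set0) => [->|] /=; last by move=> _; case: eqP; rewrite ?andbF ?andbT.
  by rewrite (biideal0 x) andbT.
have s1 : \sum_(i | biideal i.1 && (i.2 == setT)) Gt i = \sum_(L | biideal L) Gt (L, setT).
  transitivity (\sum_(L | biideal L) \sum_(R | R == setT) Gt (L, R)).
    by rewrite pair_big_dep; apply: eq_bigr => -[L R] _.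
  by apply: eq_bigr => L _; rewrite big_pred1_eq.
have s2 : \sum_(i | (i.1 == set0) && biideal i.2) Gt i = \sum_(R | biideal R) Gt (set0, R).
  transitivity (\sum_(L | L == set0) \sum_(R | biideal R) Gt (L, R)).
    by rewrite pair_big_dep; apply: eq_bigr => -[L R] _.
  by rewrite big_pred1_eq.
have s3 : \sum_(i | (i.1 == set0) && biideal i.2) Gt i = Gt (set0, setT) +
   \sum_(i | (i.1 == set0) && biideal i.2 && (i != (set0, setT))) Gt i.
  by rewrite (bigD1 (set0, setT)) //= eqxx (biidealT y).
have -> : \sum_(i | (i.1 == set0) && biideal i.2 && (i != (set0, setT))) Gt i =
   \sum_(R | biideal R) Gt (set0, R) - Gt (set0, setT).
  by rewrite -s2 s3 [Gt _ + _]addrC addrK.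
rewrite s1 Gt0T addrA; congr (_ + _ - _).
  by apply: eq_bigr => L _; rewrite GtLT.
by apply: eq_bigr => R _; rewrite Gt0R.
Qed.
End Prod.

Lemma coef2_cat (s t : H2 K) Q1 Q2 : coef2 (s ++ t) Q1 Q2 = coef2 s Q1 Q2 + coef2 t Q1 Q2.
Proof. by rewrite /coef2 big_cat. Qed.

Lemma coef2_mapDelta (q : K) P (g : K * (pp * pp) -> K * (pp * pp)) Q1 Q2 :
  coef2 (map g (Delta q P)) Q1 Q2 = \sum_(I | biideal (P := P) I)
    (g (q ^+ hcount I, (subpp (~: I), subpp I))).1 *
    (iso (g (q ^+ hcount I, (subpp (~: I), subpp I))).2.1 Q1 &&
     iso (g (q ^+ hcount I, (subpp (~: I), subpp I))).2.2 Q2)%:R.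
Proof. by rewrite coef2E /Delta -map_comp big_map big_enum. Qed.

Lemma coef2_1 (k : K) A B Q1 Q2 : coef2 [:: (k, (A, B))] Q1 Q2 = k * (iso A Q1 && iso B Q2)%:R.
Proof. by rewrite coef2E big_seq1. Qed.

Lemma part2 (q : K) x y : eqH2 (Delta q (ppmul x y))
             ([seq (u.1, (u.2.1, ppmul u.2.2 y)) | u <- Delta q x]
              ++ [seq (u.1, (ppmul x u.2.1, u.2.2)) | u <- Delta q y]
              ++ [:: (-1, (x, y))]).
Proof.
move=> Q1 Q2 _ _; rewrite !coef2_cat !coef2_mapDelta coef2_1 ppmulE prod_formula /=.
rewrite mulN1r addrA; congr (_ + _ + _).
- by apply: eq_bigr => L _; rewrite /= mul0n addn0 ?ppmulE; congr (_ * (_ && iso _ _)%:R).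
- by apply: eq_bigr => L _; rewrite /= !mul0n addn0 ?ppmulE; congr (_ * (_ && iso _ _)%:R).
- by rewrite /= !mul0n expr0 mul1r.
Qed.

Lemma part3 (q : K) x y : eqH2 (Delta q (pptl x y))
             ([seq (q ^+ (ppn u.2.1 * ppn y) * u.1, (u.2.1, pptl u.2.2 y))
              | u <- Delta q x]
              ++ [seq (q ^+ (ppn x * ppn u.2.2) * u.1, (pptl x u.2.1, u.2.2))
                 | u <- Delta q y]
              ++ [:: (- q ^+ (ppn x * ppn y), (x, y))]).
Proof.
move=> Q1 Q2 _ _; rewrite !coef2_cat !coef2_mapDelta coef2_1 pptlE prod_formula /=.
rewrite mulNr addrA; congr (_ + _ - _).
- by apply: eq_bigr => L _; rewrite /= mul1n addnC exprD ?pptlE.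
- by apply: eq_bigr => L _; rewrite /= mul1n addnC exprD ?pptlE.
- by rewrite !mul1n.
Qed.
End Formal.

Lemma gprod_unitl c P : iso (gprod c pp1 P) P.
Proof. apply: iso_sym; apply: (emb_iso (emb_rshift c pp1 P)); by []. Qed.

Lemma gprod_unitr c P : iso (gprod c P pp1) P.
Proof. apply: iso_sym; apply: (emb_iso (emb_lshift c P pp1)); by rewrite /= addn0. Qed.

Lemma gprod_assoc c P Q R : iso (gprod c (gprod c P Q) R) (gprod c P (gprod c Q R)).
Proof.
pose Z := gprod c P (gprod c Q R).
have e1 : emb (gprod c P Q) Z (fun i => match split i with
     inl a => lshift (ppn Q + ppn R) a | inr b => rshift (ppn P) (lshift (ppn R) b) end).
  apply: (@emb_gprod c P Q Z (lshift (ppn Q + ppn R)) (@rshift (ppn P) (ppn Q + ppn R) \o lshift (ppn R))).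
  - exact: emb_lshift.
  - exact: emb_comp (emb_lshift c Q R) (emb_rshift c P _).
  - by move=> a b; rewrite /= eq_lrshift.
  - by move=> a b; rewrite /= !gE.
have e2 : emb R Z (@rshift (ppn P) (ppn Q + ppn R) \o @rshift (ppn Q) (ppn R)).
  exact: emb_comp (emb_rshift c Q R) (emb_rshift c P _).
apply: (emb_iso (emb_gprod e1 e2 _ _)); last by rewrite /= addnA.
  move=> a b /=; rewrite -(splitK a); case: (split a) => a' /=; rewrite ?gE.
    by rewrite eq_lrshift.
  by rewrite (inj_eq (@rshift_inj _ _)) eq_lrshift.
move=> a b /=; rewrite -(splitK a); case: (split a) => a' /=; rewrite !gE //=.
Qed.

Section Deriv.
Variable K : fieldType.

Lemma coef2_DeltaL (D : pp -> H2 K) (s : H K) Q1 Q2 :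
  coef2 (DeltaL D s) Q1 Q2 = \sum_(t <- s) t.1 * coef2 (D t.2) Q1 Q2.
Proof.
rewrite /DeltaL coef2E big_flatten big_map; apply: eq_bigr => t _.
rewrite big_map coef2E mulr_sumr; apply: eq_bigr => u _; by rewrite mulrA.
Qed.

Lemma eq_big_all (T : Type) (p : pred T) (s : seq T) (F G : T -> K) :
  all p s -> (forall t, p t -> F t = G t) -> \sum_(t <- s) F t = \sum_(t <- s) G t.
Proof.
move=> ha hFG; elim: s ha => [|t s IH] /=; first by rewrite !big_nil.
by case/andP=> pt ps; rewrite !big_cons hFG // IH.
Qed.

Lemma deriv_gen (D : pp -> H2 K) (mul : pp -> pp -> pp)
  (HD : forall x y, plane x -> plane y ->
        eqH2 (D (mul x y))
             ([seq (u.1, (u.2.1, mul u.2.2 y)) | u <- D x]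
              ++ [seq (u.1, (mul x u.2.1, u.2.2)) | u <- D y]
              ++ [:: (-1, (x, y))])) :
  forall a b : H K, inH a -> inH b ->
        eqH2 (DeltaL D [seq (u.1 * v.1, mul u.2 v.2) | u <- a, v <- b])
             ([seq (u.1 * v.1, (u.2.1, mul u.2.2 v.2)) | u <- DeltaL D a, v <- b]
              ++ [seq (u.1 * v.1, (mul u.2 v.2.1, v.2.2)) | u <- a, v <- DeltaL D b]
              ++ [seq (- (u.1 * v.1), (u.2, v.2)) | u <- a, v <- b]).
Proof.
move=> a b pa pb Q1 Q2 p1 p2.
rewrite coef2_DeltaL big_allpairs_dep /=.
rewrite (eq_big_all pa (G := fun t => \sum_(v <- b) (t.1 * v.1) *
   (coef2 [seq (u.1, (u.2.1, mul u.2.2 v.2)) | u <- D t.2] Q1 Q2 +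
    coef2 [seq (u.1, (mul t.2 u.2.1, u.2.2)) | u <- D v.2] Q1 Q2 +
    coef2 [:: (-1, (t.2, v.2))] Q1 Q2))); last first.
  move=> t ta; apply: (eq_big_all pb) => v vb /=.
  by rewrite HD // !coef2_cat addrA.
under eq_bigr => t _ do under eq_bigr => v _ do rewrite !mulrDr.
under eq_bigr => t _ do rewrite !big_split /=.
rewrite !big_split /= !coef2_cat addrA; congr (_ + _ + _).
- rewrite coef2E big_allpairs_dep /DeltaL big_flatten big_map /=.
  apply: eq_bigr => t _; rewrite big_map /= exchange_big /=.
  apply: eq_bigr => v _; rewrite coef2E big_map mulr_sumr.
  by apply: eq_bigr => w _ /=; rewrite !mulrA [_ * v.1 * w.1]mulrAC.
- rewrite coef2E big_allpairs_dep /=.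
  apply: eq_bigr => t _; rewrite /DeltaL big_flatten big_map /=.
  apply: eq_bigr => v _; rewrite coef2E !big_map mulr_sumr.
  by apply: eq_bigr => w _ /=; rewrite !mulrA.
- rewrite coef2E big_allpairs_dep /=.
  apply: eq_bigr => t _; apply: eq_bigr => v _.
  by rewrite coef2_1 mulN1r mulrN mulNr.
Qed.

End Deriv.

Section Nest.
Variables (P : pp) (S : {set 'I_(ppn P)}).
Local Notation SP := (subpp S).

Definition pre (T : {set 'I_(ppn P)}) : {set 'I_(ppn SP)} :=
  [set j : 'I_#|S| | enum_val j \in T].

Lemma preC T : ~: pre T = pre (~: T).
Proof. by apply/setP => j; rewrite !inE. Qed.

Lemma imgpre T : enum_val @: pre T = S :&: T.
Proof.
apply/setP => z; rewrite inE; apply/imsetP/andP.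
  by case=> j; rewrite inE => jT ->; split=> //; exact: enum_valP.
case=> zS zT; exists (enum_rank_in zS z); rewrite ?inE enum_rankK_in //.
Qed.

Lemma preimg (J : {set 'I_(ppn SP)}) : pre (enum_val @: J) = J.
Proof.
apply/setP => j; rewrite inE; apply/imsetP/idP.
  by case=> i iJ /enum_val_inj ->.
by move=> jJ; exists j.
Qed.

Lemma iso_pre T : iso (subpp (pre T)) (subpp (S :&: T)).
Proof.
apply: (@iso_subpp (subpp (pre T)) P _ (enum_val \o enum_val)).
  exact: emb_comp (emb_enum (pre T)) (emb_enum S).
move=> z; rewrite inE; split.
  case/andP=> zS zT.
  have jT : enum_rank_in zS z \in pre T by rewrite inE enum_rankK_in.
  exists (enum_rank_in jT (enum_rank_in zS z)).
  by rewrite /= !enum_rankK_in.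
case=> i ->; rewrite /= enum_valP /=.
by have := enum_valP i; rewrite inE.
Qed.

Lemma biideal_pre T : biideal (P := SP) (pre T) =
  [forall a, forall b, (a \in S) && (b \in S) && (a \in T) && (ph P a b || pr P a b) ==> (b \in T)].
Proof.
apply/biidealP/forallP.
  case=> [H1 H2] a; apply/forallP => b; apply/implyP => /andP[/andP[/andP[aS bS] aT] hab].
  have := H1 (enum_rank_in aS a) (enum_rank_in bS b).
  have := H2 (enum_rank_in aS a) (enum_rank_in bS b).
  rewrite /= !inE !enum_rankK_in //.
  by case/orP: hab => -> h1 h2; [apply: h2 | apply: h1].
move=> H; split=> i j; rewrite !inE /= => iT hij.
  have := forallP (H (enum_val i)) (enum_val j).
  by rewrite !enum_valP iT hij.
have := forallP (H (enum_val i)) (enum_val j).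
by rewrite !enum_valP iT hij orbT.
Qed.

Definition hh (X Y : {set 'I_(ppn P)}) : nat :=
  (\sum_i \sum_j ((i \in X) && (j \in Y) && (i != j) && ph P i j))%N.

Lemma hcount_pre T : hcount (P := SP) (pre T) = hh (S :&: ~: T) (S :&: T).
Proof.
rewrite hcountE /hh.
transitivity (\sum_(a in S) \sum_(b in S) ((a \notin T) && (b \in T) && (a != b) && ph P a b))%N.
  rewrite [RHS]big_enum_val; apply: eq_bigr => i _; rewrite [RHS]big_enum_val; apply: eq_bigr => j _.
  by rewrite /hterm !inE (inj_eq enum_val_inj).
rewrite big_mkcond; apply: eq_bigr => a _; rewrite big_mkcond /=.
case: (boolP (a \in S)) => aS; last by rewrite big1 // => b _; rewrite inE (negPf aS).
apply: eq_bigr => b _; case: (boolP (b \in S)) => bS; by rewrite !inE ?aS ?bS ?(negPf bS) ?andbF.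
Qed.

End Nest.

Lemma hcount_hh P (I : {set 'I_(ppn P)}) : hcount I = hh (~: I) I.
Proof. by rewrite hcountE /hh; apply: eq_bigr => i _; apply: eq_bigr => j _; rewrite /hterm inE. Qed.

Lemma hhUl P (X Y Z : {set 'I_(ppn P)}) : [disjoint X & Y] ->
  hh (X :|: Y) Z = (hh X Z + hh Y Z)%N.
Proof.
move=> d; rewrite /hh -big_split; apply: eq_bigr => i _; rewrite -big_split; apply: eq_bigr => j _ /=.
rewrite inE; case: (boolP (i \in X)) => iX /=; last by rewrite add0n.
by rewrite (disjointFr d iX) addn0.
Qed.

Lemma hhUr P (X Y Z : {set 'I_(ppn P)}) : [disjoint Y & Z] ->
  hh X (Y :|: Z) = (hh X Y + hh X Z)%N.
Proof.
move=> d; rewrite /hh -big_split; apply: eq_bigr => i _; rewrite -big_split; apply: eq_bigr => j _ /=.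
rewrite inE; case: (boolP (j \in Y)) => jY /=; last by rewrite !andbF add0n.
by rewrite (disjointFr d jY) !andbF addn0.
Qed.

Section Final.
Variables (K : fieldType) (T0 : finType).

Lemma final_swap (Psi : {set T0} -> {set T0} -> {set T0} -> K) (bi : pred {set T0}) :
 \sum_(I | bi I) \sum_(T | bi (T :|: I) && (T \subset ~: I)) Psi (~: (T :|: I)) T I
 = \sum_(I | bi I) \sum_(T | bi T && (T \subset I)) Psi (~: I) (I :&: ~: T) T.
Proof.
symmetry.
rewrite (exchange_big_dep (fun T => bi T)) /=; last by move=> I T _ /andP[].
apply: eq_bigr => C biC.
rewrite (reindex_onto (fun B => B :|: C) (fun I => I :&: ~: C)); last first.
  move=> I /andP[_ /andP[_ CI]].
  by rewrite setUIl [~: C :|: C]setUC setUCr setIT; apply/setUidPl.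
apply: eq_big => B.
  rewrite biC subsetUr /= andbT.
  rewrite setIUl setICr setU0; congr andb; apply/eqP/idP.
    by move=> <-; exact: subsetIr.
  by move/setIidPl.
by case/andP=> _ /eqP ->.
Qed.
End Final.

Lemma biidealP2 P (I : {set 'I_(ppn P)}) :
  reflect (forall a b, a \in I -> ph P a b || pr P a b -> b \in I) (biideal I).
Proof.
apply: (iffP (biidealP I)) => [[H1 H2] a b aI /orP[]|H]; [exact: H1|exact: H2|].
by split=> a b aI hab; apply: H aI _; rewrite hab ?orbT.
Qed.

Lemma biideal_preP P (S T : {set 'I_(ppn P)}) :
  reflect (forall a b, a \in S -> b \in S -> a \in T -> ph P a b || pr P a b -> b \in T)
          (biideal (pre S T)).
Proof.
rewrite biideal_pre; apply: (iffP forallP) => H.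
  move=> a b aS bS aT hab; have := forallP (H a) b; by rewrite aS bS aT hab.
move=> a; apply/forallP => b; apply/implyP => /andP[/andP[/andP[aS bS] aT] hab].
exact: (H a b aS bS aT hab).
Qed.

Lemma cond_L P (I T : {set 'I_(ppn P)}) : biideal I -> T \subset ~: I ->
  biideal (pre (~: I) T) = biideal (T :|: I).
Proof.
move=> /biidealP2 bI sT; apply/biideal_preP/biidealP2 => H.
  move=> a b; rewrite !inE => /orP[aT|aI] hab; last by rewrite (bI a b aI hab) orbT.
  case: (boolP (b \in I)) => bI'; first by rewrite orbT.
  have aS : a \in ~: I := subsetP sT a aT.
  have bS : b \in ~: I by rewrite inE.
  by rewrite (H a b aS bS aT hab).
move=> a b aS bS aT hab; have := H a b; rewrite !inE aT => /(_ isT hab).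
by move: bS; rewrite inE => /negPf ->; rewrite orbF.
Qed.

Lemma cond_R P (I T : {set 'I_(ppn P)}) : biideal I -> T \subset I ->
  biideal (pre I T) = biideal T.
Proof.
move=> /biidealP2 bI sT; apply/biideal_preP/biidealP2 => H.
  move=> a b aT hab; have aI := subsetP sT a aT.
  exact: H aI (bI a b aI hab) aT hab.
move=> a b _ _ aT hab; exact: H aT hab.
Qed.

Section Coassoc.
Variables (K : fieldType).

Lemma coef3_DeltaId (D : pp -> H2 K) (s2 : H2 K) Q1 Q2 Q3 :
  coef3 (DeltaId D s2) Q1 Q2 Q3 = \sum_(t <- s2) t.1 *
     \sum_(u <- D t.2.1) u.1 * ([&& iso u.2.1 Q1, iso u.2.2 Q2 & iso t.2.2 Q3])%:R.
Proof.
rewrite /coef3 /DeltaId big_flatten big_map; apply: eq_bigr => t _.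
rewrite big_map mulr_sumr; apply: eq_bigr => u _ /=.
by case: ifP; rewrite ?mulr1 ?mulr0 ?mulrA.
Qed.

Lemma coef3_IdDelta (D : pp -> H2 K) (s2 : H2 K) Q1 Q2 Q3 :
  coef3 (IdDelta D s2) Q1 Q2 Q3 = \sum_(t <- s2) t.1 *
     \sum_(u <- D t.2.2) u.1 * ([&& iso t.2.1 Q1, iso u.2.1 Q2 & iso u.2.2 Q3])%:R.
Proof.
rewrite /coef3 /IdDelta big_flatten big_map; apply: eq_bigr => t _.
rewrite big_map mulr_sumr; apply: eq_bigr => u _ /=.
by case: ifP; rewrite ?mulr1 ?mulr0 ?mulrA.
Qed.

Lemma coef3_DeltaId_L (D : pp -> H2 K) (s : H K) Q1 Q2 Q3 :
  coef3 (DeltaId D (DeltaL D s)) Q1 Q2 Q3 =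
  \sum_(t <- s) t.1 * coef3 (DeltaId D (D t.2)) Q1 Q2 Q3.
Proof.
rewrite coef3_DeltaId /DeltaL big_flatten big_map; apply: eq_bigr => t _.
rewrite big_map coef3_DeltaId mulr_sumr; apply: eq_bigr => w _ /=; by rewrite mulrA.
Qed.

Lemma coef3_IdDelta_L (D : pp -> H2 K) (s : H K) Q1 Q2 Q3 :
  coef3 (IdDelta D (DeltaL D s)) Q1 Q2 Q3 =
  \sum_(t <- s) t.1 * coef3 (IdDelta D (D t.2)) Q1 Q2 Q3.
Proof.
rewrite coef3_IdDelta /DeltaL big_flatten big_map; apply: eq_bigr => t _.
rewrite big_map coef3_IdDelta mulr_sumr; apply: eq_bigr => w _ /=; by rewrite mulrA.
Qed.

Lemma sumDelta (q : K) P (F : K * (pp * pp) -> K) :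
  \sum_(u <- Delta q P) F u =
  \sum_(I | biideal (P := P) I) F (q ^+ hcount I, (subpp (~: I), subpp I)).
Proof. by rewrite big_map big_enum. Qed.

Lemma reindex_pre P (S : {set 'I_(ppn P)}) (F : {set 'I_#|S|} -> K) :
  \sum_(J | biideal (P := subpp S) J) F J =
  \sum_(T | biideal (pre S T) && (T \subset S)) F (pre S T).
Proof.
rewrite (reindex_onto (pre S) (fun J => enum_val @: J)) => [|J _]; last exact: preimg.
apply: eq_bigl => T; rewrite imgpre; congr andb; apply/eqP/idP.
  by move=> <-; exact: subsetIl.
by move/setIidPr.
Qed.

End Coassoc.

Section Single.
Variables (K : fieldType) (q : K) (P : pp) (Q1 Q2 Q3 : pp).

Definition Psi (A B C : {set 'I_(ppn P)}) : K :=
  q ^+ (hh A B + hh A C + hh B C) *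
  ([&& iso (subpp A) Q1, iso (subpp B) Q2 & iso (subpp C) Q3])%:R.

Lemma LHS_form (I : {set 'I_(ppn P)}) : biideal I ->
  q ^+ hcount I * \sum_(u <- Delta q (subpp (~: I))) u.1 *
     ([&& iso u.2.1 Q1, iso u.2.2 Q2 & iso (subpp I) Q3])%:R =
  \sum_(T | biideal (T :|: I) && (T \subset ~: I)) Psi (~: (T :|: I)) T I.
Proof.
move=> bI; rewrite sumDelta /= reindex_pre mulr_sumr.
apply: eq_big => T.
  case: (boolP (T \subset ~: I)) => sT; last by rewrite !andbF.
  by rewrite cond_L.
case/andP=> _ sT; rewrite preC /=.
rewrite (iso_congr Q1 (iso_pre _ _)) (iso_congr Q2 (iso_pre _ _)) hcount_pre.
have e1 : ~: I :&: T = T by apply/setIidPr.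
have e2 : ~: I :&: ~: T = ~: (T :|: I) by rewrite setCU setIC.
have e3 : ~: I = ~: (T :|: I) :|: T.
  rewrite setCU setUIl [~: T :|: T]setUC setUCr setTI; apply/esym/setUidPl.
  by apply/subsetP=> z zT; exact: (subsetP sT).
have d : [disjoint ~: (T :|: I) & T].
  by rewrite -setI_eq0 setCU setIC setIA setICr set0I.
rewrite e1 e2 /Psi mulrA -exprD hcount_hh {1}e3 hhUl //.
by rewrite addnC addnA.
Qed.

Lemma RHS_form (I : {set 'I_(ppn P)}) : biideal I ->
  q ^+ hcount I * \sum_(u <- Delta q (subpp I)) u.1 *
     ([&& iso (subpp (~: I)) Q1, iso u.2.1 Q2 & iso u.2.2 Q3])%:R =
  \sum_(T | biideal T && (T \subset I)) Psi (~: I) (I :&: ~: T) T.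
Proof.
move=> bI; rewrite sumDelta /= reindex_pre mulr_sumr.
apply: eq_big => T.
  case: (boolP (T \subset I)) => sT; last by rewrite !andbF.
  by rewrite cond_R.
case/andP=> _ sT; rewrite preC /=.
rewrite (iso_congr Q2 (iso_pre _ _)) (iso_congr Q3 (iso_pre _ _)) hcount_pre.
have e1 : I :&: T = T by apply/setIidPr.
have e3 : I = (I :&: ~: T) :|: T.
  by rewrite setUIl [~: T :|: T]setUC setUCr setIT; apply/esym/setUidPl.
have d : [disjoint I :&: ~: T & T].
  by rewrite -setI_eq0 setIAC -setIA setICr setI0.
rewrite e1 /Psi mulrA -exprD hcount_hh {2}e3 hhUr //.
Qed.

Lemma coassoc_single :
  coef3 (DeltaId (Delta q) (Delta q P)) Q1 Q2 Q3 =
  coef3 (IdDelta (Delta q) (Delta q P)) Q1 Q2 Q3.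
Proof.
rewrite coef3_DeltaId coef3_IdDelta !sumDelta /=.
rewrite (eq_bigr _ (fun I bI => LHS_form bI)) (eq_bigr _ (fun I bI => RHS_form bI)).
exact: final_swap.
Qed.

End Single.

Lemma coassoc_Delta (K : fieldType) (q : K) : coassociative (Delta q).
Proof.
move=> s _ Q1 Q2 Q3 _ _ _; rewrite coef3_DeltaId_L coef3_IdDelta_L.
by apply: eq_bigr => t _; rewrite coassoc_single.
Qed.

Unset Implicit Arguments. Set Strict Implicit.

Theorem theorem7 (K : fieldType) (q : K) :
  [/\ coassociative (Delta q),
      forall x y : pp, plane x -> plane y ->
        eqH2 (Delta q (ppmul x y))
             ([seq (u.1, (u.2.1, ppmul u.2.2 y)) | u <- Delta q x]
              ++ [seq (u.1, (ppmul x u.2.1, u.2.2)) | u <- Delta q y]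
              ++ [:: (-1, (x, y))]),
      forall x y : pp, plane x -> plane y ->
        eqH2 (Delta q (pptl x y))
             ([seq (q ^+ (ppn u.2.1 * ppn y) * u.1, (u.2.1, pptl u.2.2 y))
              | u <- Delta q x]
              ++ [seq (q ^+ (ppn x * ppn u.2.2) * u.1, (pptl x u.2.1, u.2.2))
                 | u <- Delta q y]
              ++ [:: (- q ^+ (ppn x * ppn y), (x, y))]),
      infinitesimal_hopf ppmul pp1 (Delta q) &
      infinitesimal_hopf pptl pp1 (Delta (1 : K))].
Proof.
split.
- exact: coassoc_Delta.
- by move=> x y _ _; exact: part2.
- by move=> x y _ _; exact: part3.
- split.
  + by move=> P Q R _ _ _; rewrite !ppmulE; exact: gprod_assoc.
  + by move=> P _; rewrite !ppmulE; split; [exact: gprod_unitl | exact: gprod_unitr].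
  + exact: coassoc_Delta.
  + by apply: deriv_gen => x y _ _; exact: part2.
- split.
  + by move=> P Q R _ _ _; rewrite !pptlE; exact: gprod_assoc.
  + by move=> P _; rewrite !pptlE; split; [exact: gprod_unitl | exact: gprod_unitr].
  + exact: coassoc_Delta.
  + apply: deriv_gen => x y px py Q1 Q2 p1 p2.
    rewrite (part3 1 x y p1 p2) !coef2_cat; congr (_ + (_ + _)).
    * by congr coef2; apply: eq_map => u; rewrite expr1n mul1r.
    * by congr coef2; apply: eq_map => u; rewrite expr1n mul1r.
    * by rewrite expr1n.
Qed.
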